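(* Let $k\geq 3$ and let $G$ be the cubic graph on $n=6k$ vertices $a_j,b_j,c_j,d_j,e_j,f_j$ ($j=1,\dots,k$) with edges $a_jb_j,\ a_jc_j,\ b_jd_j,\ b_je_j,\ c_jd_j,\ c_je_j,\ d_jf_j,\ e_jf_j$ for each $j$, and $f_ja_{j+1}$ for each $j$ (indices modulo $k$, so $f_k a_1$ is an edge). Then $Z(G)=M(G)=n/3+2$.
   Context: For a graph $G$ on vertices $w_1,\dots,w_n$, $S(G)$ is the set of real symmetric $n\times n$ matrices $A$ such that for $s\neq t$, $a_{st}\neq 0$ if and only if $w_s$ and $w_t$ are adjacent (diagonal entries arbitrary); the maximum nullity $M(G)$ is the maximum nullity of a matrix in $S(G)$. Zero forcing: color each vertex black or white; if a black vertex has exactly one white neighbor, that neighbor is recolored black. A set $Z$ is a zero forcing set if starting with exactly $Z$ black and applying this rule repeatedly makes all vertices black; $Z(G)$ is the minimum size of a zero forcing set. *)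

(* Defs.v *)
From HB Require Import structures.
From mathcomp Require Import all_boot all_order all_algebra.
From mathcomp Require Import reals.
Set Implicit Arguments. Unset Strict Implicit. Unset Printing Implicit Defensive.
Import Order.TTheory GRing.Theory Num.Theory.

Definition in_SG (R : realType) (n : nat) (adj : rel 'I_n) (A : 'M[R]_n) : Prop :=
  (A^T)%R = A /\ (forall s t : 'I_n, s != t -> ((A s t != 0)%R = adj s t)).

Definition nullity (R : realType) (n : nat) (A : 'M[R]_n) : nat := n - \rank A.

Definition max_nullity_is (R : realType) (n : nat) (adj : rel 'I_n) (m : nat) : Prop :=
  (exists A : 'M[R]_n, in_SG adj A /\ nullity A = m) /\
  (forall A : 'M[R]_n, in_SG adj A -> nullity A <= m).

(** One (simultaneous) round of the zero forcing color-change rule: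
    every black vertex with exactly one white neighbor forces it. Since
    forcing only enlarges the black set, iterating this yields exactly the
    final black set obtained by applying the rule repeatedly. *)
Definition force_step (n : nat) (adj : rel 'I_n) (B : {set 'I_n}) : {set 'I_n} :=
  B :|: [set w | [exists v in B,
           adj v w && (w \notin B) && (#|[set u | adj v u & u \notin B]| == 1)]].

Definition force_closure (n : nat) (adj : rel 'I_n) (Z : {set 'I_n}) : {set 'I_n} :=
  iter n (force_step adj) Z.

Definition zero_forcing_set (n : nat) (adj : rel 'I_n) (Z : {set 'I_n}) : bool :=
  force_closure adj Z == [set: 'I_n].

(** Z(G): minimum size of a zero forcing set (the full vertex set is one). *)
Definition zero_forcing_number (n : nat) (adj : rel 'I_n) : nat :=
  \big[minn/n]_(Z : {set 'I_n} | zero_forcing_set adj Z) #|Z|.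

(** The cubic graph of the statement on 6k vertices: vertex 6*j + t is
    a_j,b_j,c_j,d_j,e_j,f_j for t = 0,1,2,3,4,5 respectively (j = 0..k-1). *)
Definition block_edge (t u : nat) : bool :=
  (t, u) \in [:: (0,1); (0,2); (1,3); (1,4); (2,3); (2,4); (3,5); (4,5)]%N.

Definition chain_adj (k : nat) : rel 'I_(6 * k) := fun v w =>
  let jv := (v %/ 6)%N in let tv := (v %% 6)%N in
  let jw := (w %/ 6)%N in let tw := (w %% 6)%N in
  [|| (jv == jw) && (block_edge tv tw || block_edge tw tv),
      [&& tv == 5, tw == 0 & jw == (jv + 1) %% k]%N
    | [&& tw == 5, tv == 0 & jv == (jw + 1) %% k]%N].

(* Main.v *)
Require Import Defs.
From HB Require Import structures.
From mathcomp Require Import all_boot all_order all_algebra.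
From mathcomp Require Import reals.
Set Implicit Arguments. Unset Strict Implicit. Unset Printing Implicit Defensive.
Import Order.TTheory GRing.Theory Num.Theory.

Section Generic.
Variable n : nat.
Variable adj : rel 'I_n.

Lemma step_sub (B : {set 'I_n}) : B \subset force_step adj B.
Proof. exact: subsetUl. Qed.

Lemma step_mono (B B' : {set 'I_n}) : B \subset B' -> force_step adj B \subset force_step adj B'.
Proof.
move=> sBB'; apply/subsetP => w; rewrite !inE.
case/orP => [wB|]; first by rewrite (subsetP sBB' w wB).
case/existsP => v /andP [vB /andP [/andP [avw wnB] c1]].
case wB': (w \in B') => //=; apply/existsP; exists v.
rewrite (subsetP sBB' v vB) avw /=.
have sub : [set u | adj v u & u \notin B'] \subset [set u | adj v u & u \notin B].
  apply/subsetP => u; rewrite !inE => /andP [-> unB'] /=.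
  by apply: contra unB' => /(subsetP sBB').
have wS : w \in [set u | adj v u & u \notin B'] by rewrite inE avw wB'.
have := subset_leq_card sub; rewrite (eqP c1) => le1.
rewrite eqn_leq le1 /=.
by apply/card_gt0P; exists w.
Qed.

Lemma iter_mono m (B B' : {set 'I_n}) : B \subset B' ->
  iter m (force_step adj) B \subset iter m (force_step adj) B'.
Proof. elim: m => //= m IH sBB'; exact: step_mono (IH sBB'). Qed.

Lemma iter_incr m m' (B : {set 'I_n}) : m <= m' ->
  iter m (force_step adj) B \subset iter m' (force_step adj) B.
Proof.
move=> le; rewrite -(subnK le); elim: (m' - m) => //= d IH.
exact: subset_trans IH (step_sub _).
Qed.

Lemma force_in (B : {set 'I_n}) v w : v \in B -> adj v w ->
  (forall u, adj v u -> u != w -> u \in B) -> w \in force_step adj B.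
Proof.
move=> vB avw H; rewrite inE; case wB: (w \in B) => //=.
rewrite inE; apply/existsP; exists v; rewrite vB avw wB /=.
apply/cards1P; exists w; apply/setP => u; rewrite !inE.
case: (eqVneq u w) => [->|uw]; first by rewrite avw wB.
by case au: (adj v u) => //=; rewrite (H u au uw).
Qed.

Variable R : realType.
Local Open Scope ring_scope.

Lemma null_zero (A : 'M[R]_n) (Z : {set 'I_n}) (x : 'rV[R]_n) :
  in_SG adj A -> x *m A = 0 -> (forall z, z \in Z -> x 0 z = 0) ->
  forall m v, v \in iter m (force_step adj) Z -> x 0 v = 0.
Proof.
move=> [symA patA] xA xZ; elim=> [|m IH] v /=; first exact: xZ.
set B := iter m _ Z.
rewrite !inE; case/orP; first exact: IH.
case/existsP => u /andP [uB /andP [/andP [auv vnB] c1]].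
have Asym a b : A a b = A b a by rewrite -{1}symA mxE.
have uv : u != v by apply: contraNneq vnB => <-.
have Hw w : w != v -> x 0 w * A w u = 0.
  move=> wv; case: (eqVneq w u) => [->|wu]; first by rewrite (IH u uB) mul0r.
  case auw: (adj u w).
    have : w \in [set u0 | adj u u0 & u0 \notin B] -> w = v.
      case/cards1P: c1 => y Hy; rewrite Hy inE => /eqP ->.
      have : v \in [set u0 | adj u u0 & u0 \notin B] by rewrite inE auv vnB.
      by rewrite Hy inE => /eqP ->.
    rewrite inE auw /=; case wB: (w \in B) => /=; first by rewrite (IH w wB) mul0r.
    by move=> /(_ isT) /eqP; rewrite (negbTE wv).
  have := patA u w; rewrite eq_sym in wu; rewrite wu auw => /(_ isT) /negbFE /eqP.
  by rewrite Asym => ->; rewrite mulr0.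
have := congr1 (fun M : 'rV[R]_n => M 0 u) xA; rewrite !mxE (bigD1 v) //= big1 ?addr0; last first.
  by move=> w; apply: Hw.
move/eqP; rewrite mulf_eq0 => /orP [/eqP //|].
by rewrite Asym => /eqP Auv; move: (patA u v uv); rewrite Auv eqxx auv.
Qed.

Lemma nullity_le_ZF (A : 'M[R]_n) (Z : {set 'I_n}) :
  in_SG adj A -> zero_forcing_set adj Z -> (nullity A <= #|Z|)%N.
Proof.
move=> HA /eqP ZF.
rewrite /nullity -mxrank_ker.
set K := kermx A.
pose P : 'M[R]_(n, #|Z|) := \matrix_(i, j) (i == enum_val j)%:R.
rewrite -(mxrank_mul_ker K P).
set C := (K :&: kermx P)%MS.
suff -> : C = 0 by rewrite mxrank0 addn0 rank_leq_col.
apply/row_matrixP => i; rewrite row0.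
set y := row i C.
have yC : (y <= C)%MS by apply: row_sub.
have yA : y *m A = 0.
  apply/eqP; rewrite -sub_kermx; apply: submx_trans yC _; exact: capmxSl.
have yP : y *m P = 0.
  apply/eqP; rewrite -sub_kermx; apply: submx_trans yC _; exact: capmxSr.
have yZ z : z \in Z -> y 0 z = 0.
  move=> zZ; have := congr1 (fun M : 'rV[R]_#|Z| => M 0 (enum_rank_in zZ z)) yP.
  rewrite !mxE (bigD1 z) //= big1 ?addr0.
    by rewrite [P _ _]mxE enum_rankK_in // eqxx mulr1 mxE.
  by move=> w wz; rewrite [P _ _]mxE enum_rankK_in // (negbTE wz) mulr0.
apply/rowP => v; rewrite [RHS]mxE; have := null_zero HA yA yZ (m:=n) (v:=v); apply.
by change (v \in force_closure adj Z); rewrite ZF inE.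
Qed.

Lemma nullity_le_zfn (A : 'M[R]_n) : in_SG adj A -> (nullity A <= zero_forcing_number adj)%N.
Proof.
move=> HA; rewrite /zero_forcing_number.
apply: (big_ind (fun x => nullity A <= x)%N).
- exact: leq_subr.
- by move=> x y hx hy; rewrite leq_min hx hy.
- by move=> Z ZF; apply: nullity_le_ZF.
Qed.

End Generic.

Lemma bigmin_le_seq (I : eqType) (r : seq I) (P : pred I) (F : I -> nat) x i0 :
  i0 \in r -> P i0 -> \big[minn/x]_(i <- r | P i) F i <= F i0.
Proof.
elim: r => // a r IH; rewrite inE big_cons => /orP [/eqP <- ->|/IH H /H {}H].
  exact: geq_minl.
case: (P a) => //; exact: leq_trans (geq_minr _ _) H.
Qed.

Lemma zfn_le (n : nat) (adj : rel 'I_n) Z : zero_forcing_set adj Z -> zero_forcing_number adj <= #|Z|.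
Proof.
by move=> ZF; apply: bigmin_le_seq => //; rewrite mem_index_enum.
Qed.

From mathcomp Require Import zify.
Section Graph.
Variable k : nat.
Hypothesis hk : 2 < k.

Lemma pos6 : 0 < 6 * k. Proof. lia. Qed.

Definition vx (j t : nat) : 'I_(6*k) := Ordinal (ltn_pmod (6*j+t) pos6).
Definition jv (v : 'I_(6*k)) := (v %/ 6)%N.
Definition tv (v : 'I_(6*k)) := (v %% 6)%N.
Definition nx j := ((j + 1) %% k)%N.
Definition pj j := ((j + k - 1) %% k)%N.

Lemma jv_lt v : jv v < k.
Proof. have := ltn_ord v; rewrite /jv; lia. Qed.
Lemma tv_lt v : tv v < 6.
Proof. rewrite /tv; lia. Qed.
Lemma vx_val j t : j < k -> t < 6 -> nat_of_ord (vx j t) = 6 * j + t.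
Proof. move=> hj ht /=; rewrite modn_small //; lia. Qed.
Lemma jv_vx j t : j < k -> t < 6 -> jv (vx j t) = j.
Proof. by move=> hj ht; rewrite /jv vx_val // mulnC divnMDl // divn_small // addn0. Qed.
Lemma tv_vx j t : j < k -> t < 6 -> tv (vx j t) = t.
Proof. by move=> hj ht; rewrite /tv vx_val // mulnC modnMDl modn_small. Qed.
Lemma eq_vx v j t : j < k -> t < 6 -> (v == vx j t) = (jv v == j) && (tv v == t).
Proof.
move=> hj ht; apply/eqP/andP => [->|[/eqP hj' /eqP ht']].
  by rewrite jv_vx ?tv_vx.
apply: ord_inj; rewrite vx_val //; move: hj' ht'; rewrite /jv /tv.
have := ltn_ord v; lia.
Qed.
Lemma nx_lt j : nx j < k. Proof. rewrite /nx; apply: ltn_pmod; lia. Qed.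
Lemma pj_lt j : pj j < k. Proof. rewrite /pj; apply: ltn_pmod; lia. Qed.
Lemma nxE j : j < k -> nx j = if j.+1 == k then 0 else j.+1.
Proof.
move=> hj; rewrite /nx addn1; case: eqP => [->|h]; first exact: modnn.
rewrite modn_small //; lia.
Qed.
Lemma pjE j : j < k -> pj j = if j == 0 then k.-1 else j.-1.
Proof.
move=> hj; rewrite /pj; case: eqP => [->|h].
  rewrite add0n modn_small //; lia.
have -> : (j + k - 1 = j.-1 + k)%N by lia.
by rewrite modnDr modn_small //; lia.
Qed.
Lemma nx_pj j jw : j < k -> jw < k -> (j == nx jw) = (jw == pj j).
Proof.
move=> hj hjw; rewrite nxE // pjE //.
case: (eqVneq jw.+1 k) => h1; case: (eqVneq j 0) => h2; apply/eqP/eqP; lia.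
Qed.
Lemma nx_pjK j : j < k -> nx (pj j) = j.
Proof. by move=> hj; apply/esym/eqP; rewrite nx_pj // pj_lt. Qed.

Definition nb (v : 'I_(6*k)) : seq 'I_(6*k) :=
  let j := jv v in
  match tv v with
  | 0 => [:: vx j 1; vx j 2; vx (pj j) 5]
  | 1 | 2 => [:: vx j 0; vx j 3; vx j 4]
  | 3 | 4 => [:: vx j 1; vx j 2; vx j 5]
  | _ => [:: vx j 3; vx j 4; vx (nx j) 0]
  end.

Lemma nb_vx j t : j < k -> t < 6 -> nb (vx j t) =
  match t with
  | 0 => [:: vx j 1; vx j 2; vx (pj j) 5]
  | 1 | 2 => [:: vx j 0; vx j 3; vx j 4]
  | 3 | 4 => [:: vx j 1; vx j 2; vx j 5]
  | _ => [:: vx j 3; vx j 4; vx (nx j) 0]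
  end.
Proof. by move=> hj ht; rewrite /nb jv_vx ?tv_vx. Qed.

Lemma adj_nb v w : chain_adj v w = (w \in nb v).
Proof.
rewrite /chain_adj /nb -/(jv v) -/(jv w) -/(tv v) -/(tv w) -/(nx (jv v)) -/(nx (jv w)).
have := tv_lt v; have := tv_lt w; have := jv_lt v; have := jv_lt w.
have := pj_lt (jv v); have := nx_lt (jv v).
have := @nx_pj (jv v) (jv w).
move: (jv v) (tv v) => j t Hnp hn hp hjw hj htw ht.
rewrite (Hnp hj hjw).
do 6?[case: t ht => [|t] ht //]; rewrite !inE !eq_vx //;
move: (jv w) (tv w) hjw htw => jw tw hjw htw;
do 6?[case: tw htw => [|tw] htw //]; rewrite /= ?andbT ?andbF ?orbF //= ?(eq_sym j) //.
Qed.


Lemma adj_sym (v w : 'I_(6*k)) : chain_adj v w = chain_adj w v.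
Proof.
rewrite /chain_adj; move: (v %/ 6)%N (w %/ 6)%N (v %% 6)%N (w %% 6)%N => a b c d.
by rewrite (eq_sym a b) (orbC (block_edge c d)) (orbC [&& c == 5, d == 0 & _]%N).
Qed.

Lemma vx_jt v : v = vx (jv v) (tv v).
Proof. by apply/eqP; rewrite eq_vx ?jv_lt ?tv_lt // !eqxx. Qed.

Lemma vx_neq j j' t t' : j < k -> j' < k -> t < 6 -> t' < 6 -> t != t' -> vx j t != vx j' t'.
Proof.
move=> h1 h2 h3 h4; apply: contra => /eqP h.
by have := congr1 tv h; rewrite !tv_vx // => ->.
Qed.

Definition Z0 : {set 'I_(6*k)} :=
  [set v | (tv v == 1) || (tv v == 3) || (jv v == 0) && ((tv v == 0) || (tv v == 2))].

Definition full j : {set 'I_(6*k)} := [set v | (jv v < j) || (v \in Z0)].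

Definition F m := iter m (force_step (@chain_adj k)) Z0.

Lemma forall3 (B : {set 'I_(6*k)}) x y z w :
  (x == w) || (x \in B) -> (y == w) || (y \in B) -> (z == w) || (z \in B) ->
  forall u, u \in [:: x; y; z] -> u != w -> u \in B.
Proof.
move=> hx hy hz u; rewrite !inE => /or3P [] /eqP -> hw.
- by move: hx; rewrite (negbTE hw).
- by move: hy; rewrite (negbTE hw).
- by move: hz; rewrite (negbTE hw).
Qed.

Lemma force_vx (B : {set 'I_(6*k)}) v w : v \in B -> w \in nb v ->
  (forall u, u \in nb v -> u != w -> u \in B) -> w \in force_step (@chain_adj k) B.
Proof.
move=> vB wn H; apply: (force_in vB); first by rewrite adj_nb.
by move=> u; rewrite adj_nb; apply: H.
Qed.

Lemma in_Z0 j t : j < k -> t < 6 -> (vx j t \in Z0) = (t == 1) || (t == 3) || (j == 0) && ((t == 0) || (t == 2)).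
Proof. by move=> hj ht; rewrite inE jv_vx ?tv_vx. Qed.

Lemma in_full j' j t : j < k -> t < 6 -> (vx j t \in full j') = (j < j') || (vx j t \in Z0).
Proof. by move=> hj ht; rewrite inE jv_vx. Qed.

Lemma full1 : full 1 \subset F 1.
Proof.
apply/subsetP => v; rewrite [v]vx_jt.
have hj := jv_lt v; have ht := tv_lt v.
move: (jv v) (tv v) hj ht => j t hj ht.
rewrite in_full //; case/orP => [|vZ]; last by apply: (subsetP (step_sub _ _)).
rewrite ltnS leqn0 => /eqP ej; subst j.
rewrite /F /=.
have k0 : 0 < k by lia.
do 6?[case: t ht => [|t] ht //]; try by (apply: (subsetP (step_sub _ _)); rewrite in_Z0).
- apply: (@force_vx _ (vx 0 1)); first by rewrite in_Z0.
    by rewrite (@nb_vx (0) 1 k0 isT) /= !inE eqxx ?orbT.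
  rewrite (@nb_vx (0) 1 k0 isT) /=; apply: forall3.
  + by rewrite in_Z0 ?orbT.
  + by rewrite in_Z0 ?orbT.
  + by rewrite eqxx.
- apply: (@force_vx _ (vx 0 3)); first by rewrite in_Z0.
    by rewrite (@nb_vx (0) 3 k0 isT) /= !inE eqxx ?orbT.
  rewrite (@nb_vx (0) 3 k0 isT) /=; apply: forall3.
  + by rewrite in_Z0 ?orbT.
  + by rewrite in_Z0 ?orbT.
  + by rewrite eqxx.
Qed.

Lemma full_step j m : 0 < j -> j < k -> full j \subset F m -> full j.+1 \subset F m.+3.
Proof.
move=> j0 jk sub.
have hj1 : j.-1 < k by lia.
have nxj : nx j.-1 = j by rewrite nxE //; case: eqP; lia.
have pjj : pj j = j.-1 by rewrite pjE //; case: eqP; lia.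
set B0 := F m.
have -> : F m.+3 = force_step (@chain_adj k) (force_step (@chain_adj k) (force_step (@chain_adj k) B0)) by [].
set B1 := force_step _ B0; set B2 := force_step _ B1; set B3 := force_step _ B2.
have s01 u : u \in B0 -> u \in B1 by apply: (subsetP (step_sub _ _)).
have s12 u : u \in B1 -> u \in B2 by apply: (subsetP (step_sub _ _)).
have s23 u : u \in B2 -> u \in B3 by apply: (subsetP (step_sub _ _)).
have hZ u : u \in Z0 -> u \in B0 by move=> uZ; apply: (subsetP sub); rewrite inE uZ orbT.
have hprev t : t < 6 -> vx j.-1 t \in B0.
  by move=> ht; apply: (subsetP sub); rewrite in_full //; apply/orP; left; lia.
have bZ : vx j 1 \in B0 by apply: hZ; rewrite in_Z0.
have dZ : vx j 3 \in B0 by apply: hZ; rewrite in_Z0.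
have a1 : vx j 0 \in B1.
  apply: (@force_vx _ (vx j.-1 5)); first exact: hprev.
    by rewrite (@nb_vx (j.-1) 5 hj1 isT) /= nxj !inE eqxx ?orbT.
  rewrite (@nb_vx (j.-1) 5 hj1 isT) /= nxj; apply: forall3.
  + by rewrite (hprev 3 isT) orbT.
  + by rewrite (hprev 4 isT) orbT.
  + by rewrite eqxx.
have c2 : vx j 2 \in B2.
  apply: (@force_vx _ (vx j 0)); first exact: a1.
    by rewrite (@nb_vx (j) 0 jk isT) /= !inE eqxx ?orbT.
  rewrite (@nb_vx (j) 0 jk isT) /= pjj; apply: forall3.
  + by rewrite (s01 _ bZ) orbT.
  + by rewrite eqxx.
  + by rewrite (s01 _ (hprev 5 isT)) orbT.
have e3 : vx j 4 \in B3.
  apply: (@force_vx _ (vx j 2)); first exact: c2.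
    by rewrite (@nb_vx (j) 2 jk isT) /= !inE eqxx ?orbT.
  rewrite (@nb_vx (j) 2 jk isT) /=; apply: forall3.
  + by rewrite (s12 _ a1) orbT.
  + by rewrite (s12 _ (s01 _ dZ)) orbT.
  + by rewrite eqxx.
have f3 : vx j 5 \in B3.
  apply: (@force_vx _ (vx j 3)); first exact: (s12 _ (s01 _ dZ)).
    by rewrite (@nb_vx (j) 3 jk isT) /= !inE eqxx ?orbT.
  rewrite (@nb_vx (j) 3 jk isT) /=; apply: forall3.
  + by rewrite (s12 _ (s01 _ bZ)) orbT.
  + by rewrite c2 orbT.
  + by rewrite eqxx.
apply/subsetP => v; rewrite [v]vx_jt.
have hj := jv_lt v; have ht := tv_lt v.
move: (jv v) (tv v) hj ht => j' t hj ht.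
rewrite (in_full _ hj ht) ltnS leq_eqVlt => /orP [/orP [/eqP ej|lt]|vZ].
- subst j'.
  case: t ht => [|[|[|[|[|[|t]]]]]] ht.
  + exact: (s23 _ (s12 _ a1)).
  + exact: (s23 _ (s12 _ (s01 _ bZ))).
  + exact: (s23 _ c2).
  + exact: (s23 _ (s12 _ (s01 _ dZ))).
  + exact: e3.
  + exact: f3.
  + exfalso; by rewrite !ltnS ltn0 in ht.
- have HH : vx j' t \in full j by rewrite (in_full _ hj ht) lt.
  exact: (s23 _ (s12 _ (s01 _ (subsetP sub _ HH)))).
- exact: (s23 _ (s12 _ (s01 _ (hZ _ vZ)))).
Qed.

Lemma full_F j : 0 < j -> j <= k -> full j \subset F (3 * j - 2).
Proof.
elim: j => // j IH _ hj.
case: (posnP j) => [->|j0].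
  have -> : (3 * 1 - 2 = 1)%N by [].
  exact: full1.
have -> : (3 * j.+1 - 2 = (3 * j - 2).+3)%N by lia.
have hjk : j < k by lia.
have hjk' : j <= k by lia.
exact: (full_step j0 hjk (IH j0 hjk')).
Qed.

Lemma Z0_ZF : zero_forcing_set (@chain_adj k) Z0.
Proof.
rewrite /zero_forcing_set eqEsubset subsetT /=.
have := full_F (j := k) ltac:(lia) (leqnn k).
have -> : full k = [set: 'I_(6*k)].
  by apply/setP => v; rewrite !inE jv_lt.
move=> H; apply: subset_trans H _.
by apply: iter_incr; lia.
Qed.

Lemma card_Z0 : #|Z0| <= 2 * k + 2.
Proof.
pose f (x : ('I_k * bool + bool)%type) : 'I_(6*k) :=
  match x with inl (j, b) => vx j (if b then 1 else 3) | inr b => vx 0 (if b then 0 else 2) end.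
have : Z0 \subset f @: [set: ('I_k * bool + bool)%type].
  apply/subsetP => v; rewrite [v]vx_jt.
  have hj := jv_lt v; have ht := tv_lt v.
  move: (jv v) (tv v) hj ht => j t hj ht.
  rewrite in_Z0 //.
  case/orP => [/orP [/eqP ->|/eqP ->]|/andP [/eqP -> /orP [/eqP ->|/eqP ->]]].
  - by apply/imsetP; exists (inl (Ordinal hj, true)).
  - by apply/imsetP; exists (inl (Ordinal hj, false)).
  - by apply/imsetP; exists (inr true).
  - by apply/imsetP; exists (inr false).
move/subset_leq_card => H; apply: leq_trans H _.
apply: leq_trans (leq_imset_card _ _) _.
by rewrite cardsT card_sum card_prod card_ord card_bool; lia.
Qed.

End Graph.

From mathcomp Require Import ring.

Section Mat.
Variable R : realType.
Variable k : nat.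
Hypothesis hk : (2 < k)%N.
Local Open Scope ring_scope.

Definition A0 : 'M[R]_(6*k) := \matrix_(v, w) (@chain_adj k v w)%:R.

Lemma A0_SG : in_SG (@chain_adj k) A0.
Proof.
split.
  by apply/matrixP => v w; rewrite !mxE adj_sym.
move=> s t _; rewrite mxE; case: (chain_adj s t) => /=.
  by rewrite oner_neq0.
by rewrite eqxx.
Qed.

Definition e (u : 'I_(6*k)) : 'rV[R]_(6*k) := delta_mx 0 u.
Definition lst := k.-1.
Definition U j := e (vx hk j 1) + e (vx hk j 2) + e (vx hk lst 5).
Definition Fv j := e (vx hk j 5) - e (vx hk lst 5).
Definition Av j := e (vx hk j 0) + e (vx hk lst 3) + e (vx hk lst 4).
Definition Vv j := e (vx hk j 3) + e (vx hk j 4) - e (vx hk lst 3) - e (vx hk lst 4).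
Definition rowY (i : nat) : 'rV[R]_(6*k) :=
  if (i < k.*2)%N then (if odd i then Av i./2 else U i./2)
  else (if odd (i - k.*2) then Vv (i - k.*2)./2 else Fv (i - k.*2)./2).
Definition Y : 'M[R]_(4*k-2, 6*k) := \matrix_(i < 4*k-2) rowY i.

Lemma rowY_sub i : (i < 4*k-2)%N -> (rowY i <= Y)%MS.
Proof.
move=> hi; have <- : row (Ordinal hi) Y = rowY i by rewrite rowK.
exact: row_sub.
Qed.

Lemma U_sub j : (j < k)%N -> (U j <= Y)%MS.
Proof.
move=> hj; have -> : U j = rowY j.*2.
  by rewrite /rowY ifT ?odd_double ?doubleK //; lia.
apply: rowY_sub; lia.
Qed.

Lemma A_sub j : (j < k)%N -> (Av j <= Y)%MS.
Proof.
move=> hj; have -> : Av j = rowY j.*2.+1.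
  rewrite /rowY ifT /=; last by lia.
  by rewrite odd_double /= uphalf_double.
apply: rowY_sub; lia.
Qed.

Lemma F_sub j : (j < k.-1)%N -> (Fv j <= Y)%MS.
Proof.
move=> hj; have -> : Fv j = rowY (k.*2 + j.*2).
  rewrite /rowY ifF; last by lia.
  by rewrite addKn odd_double doubleK.
apply: rowY_sub; lia.
Qed.

Lemma V_sub j : (j < k.-1)%N -> (Vv j <= Y)%MS.
Proof.
move=> hj; have -> : Vv j = rowY (k.*2 + j.*2.+1).
  rewrite /rowY ifF; last by lia.
  by rewrite addnS subSn ?leq_addr // addKn /= odd_double /= uphalf_double.
apply: rowY_sub; lia.
Qed.

Lemma mem3R (x y z w : 'I_(6*k)) : x != y -> x != z -> y != z ->
  ((w \in [:: x; y; z])%:R : R) = (x == w)%:R + (y == w)%:R + (z == w)%:R.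
Proof.
move=> xy xz yz; rewrite !inE.
case: (eqVneq w x) => [->|wx] /=.
  by rewrite [y == x]eq_sym [z == x]eq_sym (negbTE xy) (negbTE xz) /= !addr0.

case: (eqVneq w y) => [->|wy] /=.
  by rewrite [z == y]eq_sym (negbTE yz) add0r addr0.
by rewrite eq_sym !add0r.
Qed.

Lemma nb_shape v : exists x y z, nb hk v = [:: x; y; z] /\ [/\ x != y, x != z & y != z].
Proof.
rewrite /nb; have hj := jv_lt hk v; have ht := tv_lt hk v.
have hp := pj_lt hk (jv v); have hn := nx_lt hk (jv v).
case: (tv v) ht => [|[|[|[|[|[|t]]]]]] ht //.
all: do 3 eexists; split; first reflexivity.
all: by split; apply: vx_neq.
Qed.

Lemma rowA v : row v A0 = \sum_(u <- nb hk v) e u.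
Proof.
apply/rowP => w; rewrite !mxE summxE adj_nb.
have [x [y [z [-> [xy xz yz]]]]] := nb_shape v.
by rewrite !big_cons big_nil !mxE eqxx /= mem3R // addr0 addrA [w == x]eq_sym [w == y]eq_sym [w == z]eq_sym.
Qed.
Ltac eqrow := apply/rowP => w; rewrite !mxE; ring.

Lemma A0_sub : (A0 <= Y)%MS.
Proof.
apply/row_subP => v; rewrite rowA [v](vx_jt hk).
have hj := jv_lt hk v; have ht := tv_lt hk v.
move: (jv v) (tv v) hj ht => j t hj ht.
have L : (lst < k)%N by rewrite /lst; lia.
have [jl|jl] : j = lst \/ (j < lst)%N by rewrite /lst; lia.
- subst j.
  have nl : nx k lst = 0%N by rewrite nxE // ifT //; apply/eqP; rewrite /lst; lia.
  case: t ht => [|[|[|[|[|[|t]]]]]] ht; last by exfalso; rewrite !ltnS ltn0 in ht.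
  + rewrite (@nb_vx k hk lst 0 L isT) !big_cons big_nil addr0.
    have -> : pj k lst = lst.-1 by rewrite pjE // ifF //; apply/negbTE; rewrite /lst; lia.
    have -> : e (vx hk lst 1) + (e (vx hk lst 2) + e (vx hk lst.-1 5)) = U lst + Fv lst.-1 by rewrite /U /Fv; eqrow.
    apply: addmx_sub; [exact: U_sub | apply: F_sub; rewrite /lst; lia].
  + rewrite (@nb_vx k hk lst 1 L isT) !big_cons big_nil addr0.
    have -> : e (vx hk lst 0) + (e (vx hk lst 3) + e (vx hk lst 4)) = Av lst by rewrite /Av; eqrow.
    exact: A_sub.
  + rewrite (@nb_vx k hk lst 2 L isT) !big_cons big_nil addr0.
    have -> : e (vx hk lst 0) + (e (vx hk lst 3) + e (vx hk lst 4)) = Av lst by rewrite /Av; eqrow.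
    exact: A_sub.
  + rewrite (@nb_vx k hk lst 3 L isT) !big_cons big_nil addr0.
    have -> : e (vx hk lst 1) + (e (vx hk lst 2) + e (vx hk lst 5)) = U lst by rewrite /U; eqrow.
    exact: U_sub.
  + rewrite (@nb_vx k hk lst 4 L isT) !big_cons big_nil addr0.
    have -> : e (vx hk lst 1) + (e (vx hk lst 2) + e (vx hk lst 5)) = U lst by rewrite /U; eqrow.
    exact: U_sub.
  + rewrite (@nb_vx k hk lst 5 L isT) !big_cons big_nil addr0.
    rewrite nl.
    have -> : e (vx hk lst 3) + (e (vx hk lst 4) + e (vx hk 0 0)) = Av 0 by rewrite /Av; eqrow.
    apply: A_sub; lia.
- have hj' : (j < k)%N by move: jl; rewrite /lst; lia.
  have nj : nx k j = j.+1 by rewrite nxE // ifF //; apply/negbTE; move: jl; rewrite /lst; lia.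
  case: t ht => [|[|[|[|[|[|t]]]]]] ht; last by exfalso; rewrite !ltnS ltn0 in ht.
  + rewrite (@nb_vx k hk j 0 hj' isT) !big_cons big_nil addr0.
    case: (posnP j) => [j0|jpos].
      subst j.
      have -> : pj k 0 = lst by rewrite pjE.
      have -> : e (vx hk 0 1) + (e (vx hk 0 2) + e (vx hk lst 5)) = U 0 by rewrite /U; eqrow.
      exact: U_sub.
    have -> : pj k j = j.-1 by rewrite pjE // ifF //; apply/negbTE; lia.
    have -> : e (vx hk j 1) + (e (vx hk j 2) + e (vx hk j.-1 5)) = U j + Fv j.-1 by rewrite /U /Fv; eqrow.
    apply: addmx_sub; [exact: U_sub | apply: F_sub; move: jl; rewrite /lst; lia].
  + rewrite (@nb_vx k hk j 1 hj' isT) !big_cons big_nil addr0.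
    have -> : e (vx hk j 0) + (e (vx hk j 3) + e (vx hk j 4)) = Av j + Vv j by rewrite /Av /Vv; eqrow.
    apply: addmx_sub; [exact: A_sub | exact: V_sub].
  + rewrite (@nb_vx k hk j 2 hj' isT) !big_cons big_nil addr0.
    have -> : e (vx hk j 0) + (e (vx hk j 3) + e (vx hk j 4)) = Av j + Vv j by rewrite /Av /Vv; eqrow.
    apply: addmx_sub; [exact: A_sub | exact: V_sub].
  + rewrite (@nb_vx k hk j 3 hj' isT) !big_cons big_nil addr0.
    have -> : e (vx hk j 1) + (e (vx hk j 2) + e (vx hk j 5)) = U j + Fv j by rewrite /U /Fv; eqrow.
    apply: addmx_sub; [exact: U_sub | exact: F_sub].
  + rewrite (@nb_vx k hk j 4 hj' isT) !big_cons big_nil addr0.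
    have -> : e (vx hk j 1) + (e (vx hk j 2) + e (vx hk j 5)) = U j + Fv j by rewrite /U /Fv; eqrow.
    apply: addmx_sub; [exact: U_sub | exact: F_sub].
  + rewrite (@nb_vx k hk j 5 hj' isT) !big_cons big_nil addr0.
    rewrite nj.
    have -> : e (vx hk j 3) + (e (vx hk j 4) + e (vx hk j.+1 0)) = Vv j + Av j.+1 by rewrite /Av /Vv; eqrow.
    apply: addmx_sub; [exact: V_sub | apply: A_sub; move: jl; rewrite /lst; lia].
Qed.

Lemma A0_nullity : (2 * k + 2 <= nullity A0)%N.
Proof.
rewrite /nullity.
have := mxrankS A0_sub; have := rank_leq_row Y; lia.
Qed.

End Mat.

Theorem mainTheorem10 (R : realType) (k : nat) (hk : (3 <= k)%N) :
  zero_forcing_number (@chain_adj k) = ((6 * k) %/ 3 + 2)%N /\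
  max_nullity_is R (@chain_adj k) ((6 * k) %/ 3 + 2)%N.
Proof.
have hk' : (2 < k)%N := hk.
have -> : ((6 * k) %/ 3 + 2 = 2 * k + 2)%N.
  have e6 : (6 * k = (2 * k) * 3)%N by lia.
  by rewrite e6 mulnK.
have h1 := A0_nullity R hk'.
have h2 := nullity_le_zfn (A0_SG R k).
have h3 := zfn_le (Z0_ZF hk').
have h4 := card_Z0 hk'.
split; first lia.
split.
  exists (A0 R k); split; first exact: A0_SG.
  apply/eqP; rewrite eqn_leq h1 andbT.
  exact: leq_trans h2 (leq_trans h3 h4).
move=> A HA; have := nullity_le_zfn HA; lia.
Qed.
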